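(* For any solution $(w,F)\in X\times\mathbb R$ of the height equation, with $h=H+w$ and $\eta(q)=w(q,0)$, $$\frac1{F^2}\Big[\int_{-1}^0|\rho_p|\,w(0,p)^2\,dp+\rho(0)\eta(0)^2\Big]=\int_{-1}^0\frac{w_p(0,p)^2}{H_p(p)^2\,h_p(0,p)}\,dp.$$
   Context: Fix $\alpha\in(0,1)$, $\rho\in C^{2+\alpha}([-1,0])$ with $\rho>0$, $\rho_p\le0$, and $H\in C^{3+\alpha}([-1,0])$ with $H(-1)=0$, $H(0)=1$, $H_p>0$. Let $R=\mathbb R\times(-1,0)$ (coordinates $(q,p)$), $T=\mathbb R\times\{0\}$, $B=\mathbb R\times\{-1\}$. $(w,F)$ solves the height equation if $h=H+w$ satisfies $\big(-\frac{1+h_q^2}{2h_p^2}+\frac1{2H_p^2}\big)_p+\big(\frac{h_q}{h_p}\big)_q-\frac1{F^2}\rho_p(h-H)=0$ in $R$, $\frac{1+h_q^2}{2h_p^2}-\frac1{2H_p^2}+\frac1{F^2}\rho(h-1)=0$ on $T$, $h=0$ on $B$, and $0<\inf_R(H_p+w_p)<\infty$. $X$: $w\in C^{3+\alpha}(\overline R)$ of finite norm, even in $q$, with $w$ and derivatives of order $\le2$ tending to $0$ uniformly as $|q|\to\infty$, $w=0$ on $B$. *)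

(* Defs.v *)
From Stdlib Require Import Reals Lra List ClassicalEpsilon.
From Coquelicot Require Import Coquelicot.
Open Scope R_scope.

(** The closed interval [-1,0]; the closed strip  closure(R) = R x [-1,0]. *)
Definition Icl (p : R) : Prop := -1 <= p <= 0.

(** Derivative of g : R -> R at x relative to the closed interval [-1,0]
    (one-sided at the endpoints, ordinary in the interior). *)
Definition is_deriv_I (g : R -> R) (x l : R) : Prop :=
  filterlim (fun y => (g y - g x) / (y - x))
    (within (fun y => Icl y /\ y <> x) (locally x)) (locally l).
Definition ex_deriv_I (g : R -> R) (x : R) : Prop := exists l, is_deriv_I g x l.
Definition dI (g : R -> R) (x : R) : R :=
  epsilon (inhabits 0) (fun l => is_deriv_I g x l).
Fixpoint dIn (n : nat) (g : R -> R) : R -> R :=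
  match n with O => g | S n' => dI (dIn n' g) end.

Definition cont_I (g : R -> R) : Prop :=
  forall x, Icl x -> forall eps, 0 < eps -> exists del, 0 < del /\
    forall y, Icl y -> Rabs (y - x) < del -> Rabs (g y - g x) < eps.

Definition holder_I (a : R) (g : R -> R) : Prop :=
  exists C, forall x y, Icl x -> Icl y -> x <> y ->
    Rabs (g x - g y) <= C * Rpower (Rabs (x - y)) a.

Definition CkaI (k : nat) (a : R) (g : R -> R) : Prop :=
  (forall j, (j < k)%nat -> forall x, Icl x -> ex_deriv_I (dIn j g) x) /\
  (forall j, (j <= k)%nat -> cont_I (dIn j g)) /\
  holder_I a (dIn k g).

Definition dq (f : R -> R -> R) (q p : R) : R := Derive (fun x => f x p) q.
Definition dp (f : R -> R -> R) (q p : R) : R := dI (f q) p.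
(** Iterated partial derivative along a word (true = d/dq, false = d/dp). *)
Fixpoint Dw (s : list bool) (f : R -> R -> R) : R -> R -> R :=
  match s with
  | nil => f
  | b :: s' => if b then dq (Dw s' f) else dp (Dw s' f)
  end.

Definition cont_strip (f : R -> R -> R) : Prop :=
  forall q p, Icl p -> forall eps, 0 < eps -> exists del, 0 < del /\
    forall q' p', Icl p' -> Rabs (q' - q) < del -> Rabs (p' - p) < del ->
      Rabs (f q' p' - f q p) < eps.

Definition Cka_strip (k : nat) (a : R) (f : R -> R -> R) : Prop :=
  (forall s, (length s < k)%nat -> forall q p, Icl p ->
      ex_derive (fun x => Dw s f x p) q /\ ex_deriv_I (Dw s f q) p) /\
  (forall s, (length s <= k)%nat -> cont_strip (Dw s f)) /\
  (forall s, (length s <= k)%nat -> exists M, forall q p, Icl p ->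
      Rabs (Dw s f q p) <= M) /\
  (forall s, length s = k -> exists C, forall q p q' p', Icl p -> Icl p' ->
      (q, p) <> (q', p') ->
      Rabs (Dw s f q p - Dw s f q' p') <=
        C * Rpower (sqrt ((q - q') ^ 2 + (p - p') ^ 2)) a).

Definition inX (a : R) (w : R -> R -> R) : Prop :=
  Cka_strip 3 a w /\
  (forall q p, Icl p -> w (- q) p = w q p) /\
  (forall s, (length s <= 2)%nat -> forall eps, 0 < eps -> exists M,
      forall q p, Icl p -> M < Rabs q -> Rabs (Dw s w q p) < eps) /\
  (forall q, w q (-1) = 0).

Definition hfun (H : R -> R) (w : R -> R -> R) : R -> R -> R :=
  fun q p => H p + w q p.

Definition height_eq (rho H : R -> R) (w : R -> R -> R) (F : R) : Prop :=
  let h := hfun H w in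
  let hq := dq h in
  let hp := dp h in
  (forall q p, -1 < p < 0 ->
     dp (fun q p => - (1 + hq q p ^ 2) / (2 * hp q p ^ 2)
                    + 1 / (2 * dI H p ^ 2)) q p
     + dq (fun q p => hq q p / hp q p) q p
     - 1 / F ^ 2 * dI rho p * (h q p - H p) = 0) /\
  (forall q, (1 + hq q 0 ^ 2) / (2 * hp q 0 ^ 2) - 1 / (2 * dI H 0 ^ 2)
             + 1 / F ^ 2 * rho 0 * (h q 0 - 1) = 0) /\
  (forall q, h q (-1) = 0) /\
  (exists c, 0 < c /\ forall q p, -1 < p < 0 -> c <= dI H p + dp w q p).

(* Main.v *)
Require Import Defs.
From Stdlib Require Import Reals Lra Lia List ClassicalEpsilon.
From Coquelicot Require Import Coquelicot.
Open Scope R_scope.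

Lemma ballR (x e y : R) : ball x e y <-> Rabs (y - x) < e.
Proof. unfold ball; simpl; unfold AbsRing_ball, abs, minus, plus, opp; simpl. tauto. Qed.

Lemma derI_eps g x l : is_deriv_I g x l <-> forall eps, 0 < eps -> exists del, 0 < del /\
  forall y, Icl y -> y <> x -> Rabs (y - x) < del -> Rabs ((g y - g x)/(y - x) - l) < eps.
Proof.
  unfold is_deriv_I. rewrite filterlim_locally. split.
  - intros Hl eps He. destruct (Hl (mkposreal eps He)) as [d Hd].
    exists d; split; [apply cond_pos|]. intros y Iy Ny Hy.
    specialize (Hd y). rewrite ballR in Hd. specialize (Hd Hy (conj Iy Ny)).
    rewrite ballR in Hd. exact Hd.
  - intros Hl eps. destruct (Hl eps (cond_pos eps)) as [d [Hd1 Hd2]].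
    exists (mkposreal d Hd1). intros y Hy [Iy Ny]. rewrite ballR in Hy. rewrite ballR.
    apply Hd2; auto.
Qed.

Lemma Icl_near x d : Icl x -> 0 < d -> exists y, Icl y /\ y <> x /\ Rabs (y - x) < d.
Proof.
  unfold Icl; intros Ix Hd.
  destruct (Rle_lt_dec x (-1/2)).
  - exists (x + Rmin (d/2) (1/4)). assert (0 < Rmin (d/2) (1/4)) by (apply Rmin_glb_lt; lra).
    assert (Rmin (d/2) (1/4) <= d/2) by apply Rmin_l. assert (Rmin (d/2) (1/4) <= 1/4) by apply Rmin_r.
    repeat split; try lra. rewrite Rabs_right; lra.
  - exists (x - Rmin (d/2) (1/4)). assert (0 < Rmin (d/2) (1/4)) by (apply Rmin_glb_lt; lra).
    assert (Rmin (d/2) (1/4) <= d/2) by apply Rmin_l. assert (Rmin (d/2) (1/4) <= 1/4) by apply Rmin_r.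
    repeat split; try lra. rewrite Rabs_left; lra.
Qed.

Lemma derI_unique g x l1 l2 : Icl x -> is_deriv_I g x l1 -> is_deriv_I g x l2 -> l1 = l2.
Proof.
  intros Ix H1 H2. rewrite derI_eps in H1, H2.
  destruct (Req_dec l1 l2) as [|Hn]; auto. exfalso.
  set (e := Rabs (l1 - l2) / 2). assert (He : 0 < e) by (unfold e; apply Rdiv_lt_0_compat; [apply Rabs_pos_lt; lra| lra]).
  destruct (H1 e He) as [d1 [Hd1 P1]]. destruct (H2 e He) as [d2 [Hd2 P2]].
  destruct (Icl_near x (Rmin d1 d2) Ix) as [y [Iy [Ny Hy]]]. apply Rmin_glb_lt; auto.
  assert (Rmin d1 d2 <= d1) by apply Rmin_l. assert (Rmin d1 d2 <= d2) by apply Rmin_r.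
  specialize (P1 y Iy Ny ltac:(lra)). specialize (P2 y Iy Ny ltac:(lra)).
  set (z := (g y - g x) / (y - x)) in *.
  assert (Rabs (l1 - l2) <= Rabs (z - l1) + Rabs (z - l2)).
  { replace (l1 - l2) with (-(z - l1) + (z - l2)) by ring. eapply Rle_trans. apply Rabs_triang. rewrite Rabs_Ropp. lra. }
  unfold e in *. lra.
Qed.

Lemma dI_spec g x : ex_deriv_I g x -> is_deriv_I g x (dI g x).
Proof.
  intros [l Hl]. unfold dI. apply (epsilon_spec (inhabits 0) (fun l => is_deriv_I g x l)). eauto.
Qed.

Lemma dI_eq g x l : Icl x -> is_deriv_I g x l -> dI g x = l.
Proof. intros Ix Hl. apply (derI_unique g x); [exact Ix| |exact Hl]. apply dI_spec. exists l; exact Hl. Qed.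

Lemma derive_derI g x l : is_derive g x l -> is_deriv_I g x l.
Proof.
  intros Hd. rewrite is_derive_Reals in Hd. rewrite derI_eps. intros eps He.
  destruct (Hd eps He) as [d Hd']. exists d; split; [apply cond_pos|].
  intros y Iy Ny Hy. specialize (Hd' (y - x) ltac:(lra) Hy). replace (x + (y - x)) with y in Hd' by ring. exact Hd'.
Qed.

Lemma derI_derive g x l : -1 < x < 0 -> is_deriv_I g x l -> is_derive g x l.
Proof.
  intros Ix Hd. rewrite is_derive_Reals. rewrite derI_eps in Hd. intros eps He.
  destruct (Hd eps He) as [d [Hd1 Hd2]].
  assert (Hm : 0 < Rmin d (Rmin (x + 1) (- x))) by (repeat apply Rmin_glb_lt; lra).
  exists (mkposreal _ Hm). intros h Hh Hlt. simpl in Hlt.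
  assert (Rmin d (Rmin (x + 1) (- x)) <= d) by apply Rmin_l.
  assert (Rmin d (Rmin (x + 1) (- x)) <= Rmin (x+1) (-x)) by apply Rmin_r.
  assert (Rmin (x + 1) (- x) <= x+1) by apply Rmin_l. assert (Rmin (x + 1) (- x) <= -x) by apply Rmin_r.
  assert (Hb : - x - 1 < h < - x) by (assert (- (x+1) < h < x + 1) by (apply Rabs_lt_between; lra); assert (- (-x) < h < - x) by (apply Rabs_lt_between; lra); lra).
  specialize (Hd2 (x + h)). replace (x + h - x) with h in Hd2 by ring. apply Hd2. unfold Icl; lra. lra. lra.
Qed.
Lemma dI_interior g x : -1 < x < 0 -> ex_deriv_I g x -> is_derive g x (dI g x).
Proof. intros Ix Hd. apply derI_derive; auto. apply dI_spec; auto. Qed.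

Lemma derI_ext f g x l : Icl x -> (forall y, Icl y -> f y = g y) -> is_deriv_I g x l -> is_deriv_I f x l.
Proof.
  intros Ix Hfg Hd. rewrite derI_eps in *. intros eps He. destruct (Hd eps He) as [d [Hd1 Hd2]].
  exists d; split; auto. intros y Iy Ny Hy. rewrite !Hfg; auto.
Qed.

Lemma derI_plus f g x l1 l2 : is_deriv_I f x l1 -> is_deriv_I g x l2 -> is_deriv_I (fun y => f y + g y) x (l1 + l2).
Proof.
  intros H1 H2. rewrite derI_eps in *. intros eps He.
  destruct (H1 (eps/2) ltac:(lra)) as [d1 [Hd1 P1]]. destruct (H2 (eps/2) ltac:(lra)) as [d2 [Hd2 P2]].
  exists (Rmin d1 d2); split. apply Rmin_glb_lt; auto.
  intros y Iy Ny Hy. assert (Rmin d1 d2 <= d1) by apply Rmin_l. assert (Rmin d1 d2 <= d2) by apply Rmin_r.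
  specialize (P1 y Iy Ny ltac:(lra)). specialize (P2 y Iy Ny ltac:(lra)).
  replace ((f y + g y - (f x + g x)) / (y - x) - (l1 + l2)) with
    (((f y - f x) / (y - x) - l1) + ((g y - g x) / (y - x) - l2)) by (field; lra).
  eapply Rle_lt_trans. apply Rabs_triang. lra.
Qed.

Definition clamp (v : R) : R := Rmax (-1) (Rmin v 0).

Lemma clamp_Icl v : Icl (clamp v).
Proof. unfold clamp, Icl, Rmax, Rmin. repeat destruct Rle_dec; lra. Qed.

Lemma clamp_id v : Icl v -> clamp v = v.
Proof. unfold clamp, Icl, Rmax, Rmin. repeat destruct Rle_dec; lra. Qed.

Lemma clamp_lip v y : Rabs (clamp v - clamp y) <= Rabs (v - y).
Proof.
  unfold clamp, Rmax, Rmin. repeat destruct Rle_dec; unfold Rabs; repeat destruct Rcase_abs; lra.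
Qed.

Definition C2 (f : R -> R -> R) : Prop := forall x y, continuity_2d_pt (fun u v => f u (clamp v)) x y.

Lemma cont_strip_C2 f : cont_strip f -> C2 f.
Proof.
  intros Hf x y eps. destruct (Hf x (clamp y) (clamp_Icl y) eps (cond_pos eps)) as [d [Hd P]].
  exists (mkposreal d Hd). intros u v Hu Hv. simpl in *. apply P; auto. apply clamp_Icl.
  eapply Rle_lt_trans. apply clamp_lip. auto.
Qed.

Lemma cont_I_C2 (g : R -> R) : cont_I g -> C2 (fun _ p => g p).
Proof.
  intros Hg x y eps. destruct (Hg (clamp y) (clamp_Icl y) eps (cond_pos eps)) as [d [Hd P]].
  exists (mkposreal d Hd). intros u v Hu Hv. simpl in *. apply P; auto. apply clamp_Icl.
  eapply Rle_lt_trans. apply clamp_lip. auto.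
Qed.

Lemma c2d_snd F x y : continuity_2d_pt F x y -> continuity_pt (fun v => F x v) y.
Proof.
  intros Hc eps He. destruct (Hc (mkposreal eps He)) as [d P]. exists d; split; [apply cond_pos|].
  intros v [_ Hv]. simpl in *. unfold R_dist in *. apply P; auto. rewrite Rminus_eq_0, Rabs_R0. apply cond_pos.
Qed.

Lemma c2d_fst F x y : continuity_2d_pt F x y -> continuity_pt (fun u => F u y) x.
Proof.
  intros Hc eps He. destruct (Hc (mkposreal eps He)) as [d P]. exists d; split; [apply cond_pos|].
  intros v [_ Hv]. simpl in *. unfold R_dist in *. apply P; auto. rewrite Rminus_eq_0, Rabs_R0. apply cond_pos.
Qed.

Lemma C2_cont_I f q : C2 f -> cont_I (f q).
Proof.
  intros Hf x Ix eps He. assert (Hc := c2d_snd _ _ _ (Hf q x) eps He).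
  destruct Hc as [d [Hd P]]. exists d; split; auto. intros y Iy Hy.
  destruct (Req_dec y x) as [->|Ny]. rewrite Rminus_eq_0, Rabs_R0; lra.
  specialize (P y (conj (conj I (not_eq_sym Ny)) Hy)). simpl in P. unfold R_dist in P.
  rewrite !clamp_id in P; auto.
Qed.

Lemma C2_contpt f q y : C2 f -> continuity_pt (fun v => f q (clamp v)) y.
Proof. intros Hf. apply (c2d_snd (fun u v => f u (clamp v))). apply Hf. Qed.

Lemma cont_strip_int f q p : cont_strip f -> -1 < p < 0 -> continuity_2d_pt f q p.
Proof.
  intros Hf Ip eps. destruct (Hf q p ltac:(unfold Icl; lra) eps (cond_pos eps)) as [d [Hd P]].
  assert (Hm : 0 < Rmin d (Rmin (p + 1) (- p))) by (repeat apply Rmin_glb_lt; lra).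
  exists (mkposreal _ Hm). simpl. intros u v Hu Hv.
  assert (Rmin d (Rmin (p + 1) (- p)) <= d) by apply Rmin_l.
  assert (Rmin d (Rmin (p + 1) (- p)) <= Rmin (p+1) (-p)) by apply Rmin_r.
  assert (Rmin (p + 1) (- p) <= p+1) by apply Rmin_l. assert (Rmin (p + 1) (- p) <= -p) by apply Rmin_r.
  assert (- (p+1) < v - p < p + 1) by (apply Rabs_lt_between; lra).
  assert (- (-p) < v - p < - p) by (apply Rabs_lt_between; lra).
  apply P; try lra. unfold Icl; lra.
Qed.
Lemma locally_int x : -1 < x < 0 -> locally x (fun t => -1 < t < 0).
Proof.
  intros Ix. assert (Hm : 0 < Rmin (x + 1) (- x)) by (apply Rmin_glb_lt; lra).
  exists (mkposreal _ Hm). intros y Hy. rewrite ballR in Hy. simpl in Hy.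
  assert (Rmin (x + 1) (- x) <= x+1) by apply Rmin_l. assert (Rmin (x + 1) (- x) <= -x) by apply Rmin_r.
  assert (- (x+1) < y - x < x + 1) by (apply Rabs_lt_between; lra).
  assert (- (-x) < y - x < - x) by (apply Rabs_lt_between; lra). lra.
Qed.

Lemma cont_I_clamp g y : cont_I g -> continuity_pt (fun v => g (clamp v)) y.
Proof. intros Hg. apply (C2_contpt (fun _ p => g p) 0 y). apply cont_I_C2; auto. Qed.

Lemma cont_I_ex_RInt g : cont_I g -> forall a b, ex_RInt (fun v => g (clamp v)) a b.
Proof.
  intros Hg a b. apply (@ex_RInt_continuous R_CompleteNormedModule). intros z _. apply continuity_pt_filterlim. apply cont_I_clamp; auto.
Qed.

Lemma cont_I_ex_RInt' g : cont_I g -> ex_RInt g (-1) 0.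
Proof.
  intros Hg. apply (ex_RInt_ext (fun v => g (clamp v))). intros x Hx. rewrite Rmin_left, Rmax_right in Hx by lra.
  rewrite clamp_id; auto. unfold Icl; lra. apply cont_I_ex_RInt; auto.
Qed.

Lemma FTC_I (G g : R -> R) : (forall x, -1 < x < 0 -> is_derive G x (g x)) -> cont_I G -> cont_I g ->
  RInt g (-1) 0 = G 0 - G (-1).
Proof.
  intros HD HG Hg. set (gc := fun v => g (clamp v)).
  set (Phi := fun y => RInt gc (-1) y).
  assert (HP : forall y, is_derive Phi y (gc y)).
  { intros y. apply (is_derive_RInt gc Phi (-1) y). apply filter_forall. intros b. apply (@RInt_correct R_CompleteNormedModule). apply cont_I_ex_RInt; auto.
    apply continuity_pt_filterlim. apply cont_I_clamp; auto. }
  set (K := fun y => G (clamp y) - Phi y).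
  destruct (MVT_gen K (-1) 0 (fun _ => 0)) as [c [_ Hc]].
  - rewrite Rmin_left, Rmax_right by lra. intros x Ix.
    unfold K. replace 0 with (g x - gc x) by (unfold gc; rewrite clamp_id; [ring|unfold Icl; lra]).
    apply (is_derive_minus (fun y => G (clamp y)) Phi). 2: apply HP.
    apply (is_derive_ext_loc G). 2: apply HD; auto.
    generalize (locally_int x Ix). apply filter_imp. intros t Ht. rewrite clamp_id; auto. unfold Icl; lra.
  - rewrite Rmin_left, Rmax_right by lra. intros x Ix. unfold K. apply continuity_pt_minus.
    apply cont_I_clamp; auto. apply continuity_pt_filterlim. apply (@ex_derive_continuous R_AbsRing R_NormedModule). eexists; apply HP.
  - unfold K in Hc. rewrite !clamp_id in Hc by (unfold Icl; lra).
    assert (Phi (-1) = 0). { unfold Phi. apply (@RInt_point R_CompleteNormedModule). }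
    assert (RInt g (-1) 0 = Phi 0).
    { unfold Phi. apply RInt_ext. intros x Hx. rewrite Rmin_left, Rmax_right in Hx by lra. unfold gc. rewrite clamp_id; auto. unfold Icl; lra. }
    lra.
Qed.

Lemma deriv0_const (S : R -> R) : (forall x, is_derive S x 0) -> forall a b, S a = S b.
Proof.
  intros HS a b. destruct (MVT_gen S a b (fun _ => 0)) as [c [_ Hc]].
  - intros; apply HS.
  - intros x _. apply continuity_pt_filterlim. apply (@ex_derive_continuous R_AbsRing R_NormedModule). eexists; apply HS.
  - lra.
Qed.
Definition Bh (H : R -> R) (w : R -> R -> R) q p := dI H p + dp w q p.
Definition Iq (rho H : R -> R) w F q p :=
  (1 - dq w q p ^ 2) / (2 * Bh H w q p) + Bh H w q p / (2 * dI H p ^ 2) + dI rho p * w q p ^ 2 / (2 * F ^ 2).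
Definition Eq1 (rho H : R -> R) w F q p :=
  - dq w q p * dq (dq w) q p / Bh H w q p - (1 - dq w q p ^ 2) * dq (dp w) q p / (2 * Bh H w q p ^ 2)
  + dq (dp w) q p / (2 * dI H p ^ 2) + dI rho p * w q p * dq w q p / F ^ 2.

Lemma Iq_deriv rho H w F q p : ex_derive (fun x => w x p) q -> ex_derive (fun x => dq w x p) q ->
  ex_derive (fun x => dp w x p) q -> Bh H w q p <> 0 -> dI H p <> 0 -> F <> 0 ->
  is_derive (fun x => Iq rho H w F x p) q (Eq1 rho H w F q p).
Proof.
  intros E0 E1' E2 HB HH HF. unfold Iq, Eq1, Bh.
  auto_derive.
  - repeat split; auto.
  - change (Derive (fun x => dq w x p) q) with (dq (dq w) q p). change (Derive (fun x => dp w x p) q) with (dq (dp w) q p). change (Derive (fun x => w x p) q) with (dq w q p). unfold Bh in HB. field. auto.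
Qed.
Record Reg (H : R -> R) (w : R -> R -> R) : Prop := {
  Ew : forall q p, Icl p -> ex_derive (fun x => w x p) q;
  Ewq : forall q p, Icl p -> ex_derive (fun x => dq w x p) q;
  Ewp : forall q p, Icl p -> ex_derive (fun x => dp w x p) q;
  Iw : forall q p, Icl p -> ex_deriv_I (w q) p;
  Iwq : forall q p, Icl p -> ex_deriv_I (dq w q) p;
  Iwp : forall q p, Icl p -> ex_deriv_I (dp w q) p;
  Cw : cont_strip w; Cwq : cont_strip (dq w); Cwp : cont_strip (dp w);
  Cwqq : cont_strip (dq (dq w)); Cwqp : cont_strip (dq (dp w)); Cwpq : cont_strip (dp (dq w));
  IH : forall p, Icl p -> ex_deriv_I H p;
  IHp : forall p, Icl p -> ex_deriv_I (dI H) p;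
  CHp : cont_I (dI H);
  Hpos : forall p, Icl p -> 0 < dI H p
}.

Lemma Icl_int_near p d : Icl p -> 0 < d -> exists y, -1 < y < 0 /\ Rabs (y - p) < d.
Proof.
  unfold Icl; intros Ip Hd. set (e := Rmin (d/2) (1/4)).
  assert (0 < e) by (apply Rmin_glb_lt; lra). assert (e <= d/2) by apply Rmin_l. assert (e <= 1/4) by apply Rmin_r.
  destruct (Rle_lt_dec p (-1/2)).
  - exists (p + e). split; [lra|]. rewrite Rabs_right; lra.
  - exists (p - e). split; [lra|]. rewrite Rabs_left; lra.
Qed.

Lemma cont_I_lb (g : R -> R) c : cont_I g -> (forall y, -1 < y < 0 -> c <= g y) -> forall p, Icl p -> c <= g p.
Proof.
  intros Hg Hc p Ip. destruct (Rle_lt_dec c (g p)) as [|Hlt]; auto. exfalso.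
  destruct (Hg p Ip (c - g p) ltac:(lra)) as [d [Hd P]].
  destruct (Icl_int_near p d Ip Hd) as [y [Iy Hy]].
  specialize (P y ltac:(unfold Icl; lra) Hy). specialize (Hc y Iy).
  assert (Hr := Rle_abs (g y - g p)). lra.
Qed.

Lemma cont_strip_I f q : cont_strip f -> cont_I (f q).
Proof.
  intros Hf x Ix eps He. destruct (Hf q x Ix eps He) as [d [Hd P]]. exists d; split; auto.
  intros y Iy Hy. apply P; auto. rewrite Rminus_eq_0, Rabs_R0; auto.
Qed.

Lemma cont_I_plus f g : cont_I f -> cont_I g -> cont_I (fun p => f p + g p).
Proof.
  intros Hf Hg x Ix eps He. destruct (Hf x Ix (eps/2) ltac:(lra)) as [d1 [Hd1 P1]].
  destruct (Hg x Ix (eps/2) ltac:(lra)) as [d2 [Hd2 P2]].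
  exists (Rmin d1 d2); split. apply Rmin_glb_lt; auto.
  intros y Iy Hy. assert (Rmin d1 d2 <= d1) by apply Rmin_l. assert (Rmin d1 d2 <= d2) by apply Rmin_r.
  specialize (P1 y Iy ltac:(lra)). specialize (P2 y Iy ltac:(lra)).
  replace (f y + g y - (f x + g x)) with ((f y - f x) + (g y - g x)) by ring.
  eapply Rle_lt_trans. apply Rabs_triang. lra.
Qed.

Lemma B_lb H w c : Reg H w -> (forall q p, -1 < p < 0 -> c <= dI H p + dp w q p) ->
  forall q p, Icl p -> c <= Bh H w q p.
Proof.
  intros R Hc q. apply (cont_I_lb (fun p => Bh H w q p)).
  - unfold Bh. apply cont_I_plus. apply (CHp _ _ R). apply cont_strip_I. apply (Cwp _ _ R).
  - intros; apply Hc; auto.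
Qed.

Lemma hq_eq H w q p : Reg H w -> Icl p -> dq (hfun H w) q p = dq w q p.
Proof.
  intros R Ip. unfold dq, hfun. rewrite Derive_plus. rewrite Derive_const. ring.
  apply ex_derive_const. apply (Ew _ _ R); auto.
Qed.

Lemma hp_eq H w q p : Reg H w -> Icl p -> dp (hfun H w) q p = Bh H w q p.
Proof.
  intros R Ip. unfold dp, hfun, Bh. apply dI_eq; auto.
  apply (derI_plus H (w q)); apply dI_spec. apply (IH _ _ R); auto. apply (Iw _ _ R); auto.
Qed.
Lemma loc2d_int (P : R -> R -> Prop) q p : -1 < p < 0 -> (forall u v, -1 < v < 0 -> P u v) -> locally_2d P q p.
Proof.
  intros Ip HP. assert (Hm : 0 < Rmin (p + 1) (- p)) by (apply Rmin_glb_lt; lra).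
  exists (mkposreal _ Hm). simpl. intros u v _ Hv. apply HP.
  assert (Rmin (p + 1) (- p) <= p+1) by apply Rmin_l. assert (Rmin (p + 1) (- p) <= -p) by apply Rmin_r.
  assert (- (p+1) < v - p < p + 1) by (apply Rabs_lt_between; lra).
  assert (- (-p) < v - p < - p) by (apply Rabs_lt_between; lra). lra.
Qed.

Lemma dI_Derive g x : -1 < x < 0 -> ex_deriv_I g x -> Derive g x = dI g x.
Proof. intros Ix Hd. apply is_derive_unique. apply dI_interior; auto. Qed.

Lemma Icl_of p : -1 < p < 0 -> Icl p.
Proof. unfold Icl; lra. Qed.

Lemma schwarz_w H w q p : Reg H w -> -1 < p < 0 -> dq (dp w) q p = dp (dq w) q p.
Proof.
  intros R Ip. assert (S := Schwarz w q p).
  assert (E1 : forall z v, -1 < v < 0 -> Derive (fun t => w z t) v = dp w z v).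
  { intros z v Iv. unfold dp. apply dI_Derive; auto. apply (Iw _ _ R). apply Icl_of; auto. }
  assert (E2 : forall u v, -1 < v < 0 -> Derive (fun z => Derive (fun t => w z t) v) u = dq (dp w) u v).
  { intros u v Iv. unfold dq at 1. apply Derive_ext. intros; apply E1; auto. }
  assert (E3 : forall u v, -1 < v < 0 -> Derive (fun z => Derive (fun t => w t z) u) v = dp (dq w) u v).
  { intros u v Iv. unfold dp at 1. apply dI_Derive; auto. apply (Iwq _ _ R). apply Icl_of; auto. }
  rewrite <- E2, <- E3 by auto. apply S.
  - apply loc2d_int; auto. intros u v Iv. repeat split.
    + apply (Ew _ _ R). apply Icl_of; auto.
    + eexists. apply dI_interior; auto. apply (Iw _ _ R). apply Icl_of; auto.
    + apply (ex_derive_ext (fun z => dp w z v)). intros; rewrite E1; auto. apply (Ewp _ _ R). apply Icl_of; auto.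
    + eexists. apply dI_interior; auto. apply (Iwq _ _ R). apply Icl_of; auto.
  - apply (continuity_2d_pt_ext_loc (dq (dp w))). apply loc2d_int; auto. intros; rewrite E2; auto.
    apply cont_strip_int; auto. apply (Cwqp _ _ R).
  - apply (continuity_2d_pt_ext_loc (dp (dq w))). apply loc2d_int; auto. intros; rewrite E3; auto.
    apply cont_strip_int; auto. apply (Cwpq _ _ R).
Qed.
Definition Atil (H : R -> R) w q p := -(1 + dq w q p ^ 2) / (2 * Bh H w q p ^ 2) + 1 / (2 * dI H p ^ 2).
Definition Jq (H : R -> R) w q p := dq w q p * (- Atil H w q p).

Lemma Atil_ex H w q p c : Reg H w -> 0 < c -> (forall q p, Icl p -> c <= Bh H w q p) -> -1 < p < 0 ->
  ex_derive (Atil H w q) p.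
Proof.
  intros R Hc HB Ip. assert (Ip' := Icl_of p Ip).
  assert (Bh H w q p <> 0) by (specialize (HB q p Ip'); lra).
  assert (dI H p <> 0) by (specialize (Hpos _ _ R p Ip'); lra).
  unfold Atil, Bh in *. auto_derive. repeat split; auto.
  all: try (eexists; apply dI_interior; [exact Ip| first [apply (Iwq _ _ R) | apply (IHp _ _ R) | apply (Iwp _ _ R)]; auto]).
  all: repeat rewrite Rmult_1_r; repeat apply Rmult_integral_contrapositive_currified; auto; lra.
Qed.

Lemma quot_deriv H w q p c : Reg H w -> 0 < c -> (forall q p, Icl p -> c <= Bh H w q p) -> Icl p ->
  is_derive (fun x => dq w x p / Bh H w x p) q
    ((dq (dq w) q p * Bh H w q p - dq w q p * dq (dp w) q p) / Bh H w q p ^ 2).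
Proof.
  intros R Hc HB Ip. assert (Bh H w q p <> 0) by (specialize (HB q p Ip); lra).
  unfold Bh in *. auto_derive.
  - repeat split; auto. apply (Ewq _ _ R); auto. apply (Ewp _ _ R); auto.
  - change (Derive (fun x => dq w x p) q) with (dq (dq w) q p). change (Derive (fun x => dp w x p) q) with (dq (dp w) q p).
    field. auto.
Qed.

Lemma PDE_use rho H w F q p c : Reg H w -> height_eq rho H w F -> F <> 0 -> 0 < c ->
  (forall q p, Icl p -> c <= Bh H w q p) -> -1 < p < 0 ->
  Derive (Atil H w q) p = - ((dq (dq w) q p * Bh H w q p - dq w q p * dq (dp w) q p) / Bh H w q p ^ 2)
     + dI rho p * w q p / F ^ 2.
Proof.
  intros R HE HF Hc HB Ip. assert (Ip' := Icl_of p Ip).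
  destruct HE as [PDE _]. specialize (PDE q p Ip).
  assert (T1 : dp (fun q p => - (1 + dq (hfun H w) q p ^ 2) / (2 * dp (hfun H w) q p ^ 2)
                    + 1 / (2 * dI H p ^ 2)) q p = Derive (Atil H w q) p).
  { unfold dp at 1. apply dI_eq; auto. apply (derI_ext _ (Atil H w q)); auto.
    - intros y Iy. unfold Atil. rewrite hq_eq, hp_eq; auto.
    - apply derive_derI. destruct (Atil_ex H w q p c R Hc HB Ip) as [l Hl]. rewrite (is_derive_unique _ _ _ Hl). exact Hl. }
  assert (T2 : dq (fun q p => dq (hfun H w) q p / dp (hfun H w) q p) q p =
     (dq (dq w) q p * Bh H w q p - dq w q p * dq (dp w) q p) / Bh H w q p ^ 2).
  { unfold dq at 1. rewrite (Derive_ext _ (fun x => dq w x p / Bh H w x p)).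
    apply is_derive_unique. apply (quot_deriv H w q p c); auto.
    intros t. rewrite hq_eq, hp_eq; auto. }
  assert (T3 : hfun H w q p - H p = w q p) by (unfold hfun; ring).
  cbv beta zeta in PDE. rewrite T1, T2, T3 in PDE.
  set (X := (dq (dq w) q p * Bh H w q p - dq w q p * dq (dp w) q p) / Bh H w q p ^ 2) in *.
  replace (dI rho p * w q p / F ^ 2) with (1 / F ^ 2 * dI rho p * w q p) by (field; auto). lra.
Qed.
Lemma Jq_deriv rho H w F q p c : Reg H w -> height_eq rho H w F -> F <> 0 -> 0 < c ->
  (forall q p, Icl p -> c <= Bh H w q p) -> -1 < p < 0 ->
  is_derive (Jq H w q) p (- Eq1 rho H w F q p).
Proof.
  intros R HE HF Hc HB Ip. assert (Ip' := Icl_of p Ip).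
  assert (Bh H w q p <> 0) by (specialize (HB q p Ip'); lra).
  assert (dI H p <> 0) by (specialize (Hpos _ _ R p Ip'); lra).
  assert (EA := Atil_ex H w q p c R Hc HB Ip).
  assert (PA := PDE_use rho H w F q p c R HE HF Hc HB Ip).
  assert (Dwq : Derive (fun x => dq w q x) p = dq (dp w) q p).
  { rewrite (schwarz_w H w q p R Ip). unfold dp. apply dI_Derive; auto. apply (Iwq _ _ R); auto. }
  unfold Jq. auto_derive.
  - split. eexists. apply dI_interior; auto. apply (Iwq _ _ R); auto. split; auto.
  - rewrite Dwq. change (Derive (fun x => Atil H w q x) p) with (Derive (Atil H w q) p). rewrite PA.
    unfold Eq1, Atil. field. auto.
Qed.
Lemma c2d_minus f g x y : continuity_2d_pt f x y -> continuity_2d_pt g x y ->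
  continuity_2d_pt (fun u v => f u v - g u v) x y.
Proof. intros. apply continuity_2d_pt_plus; auto. apply continuity_2d_pt_opp; auto. Qed.

Lemma c2d_div f g x y : continuity_2d_pt f x y -> continuity_2d_pt g x y -> g x y <> 0 ->
  continuity_2d_pt (fun u v => f u v / g u v) x y.
Proof. intros. apply continuity_2d_pt_mult; auto. apply continuity_2d_pt_inv; auto. Qed.

Lemma c2d_pow f x y n : continuity_2d_pt f x y -> continuity_2d_pt (fun u v => f u v ^ n) x y.
Proof.
  intros Hf. induction n. apply (continuity_2d_pt_ext (fun _ _ => 1)). intros; reflexivity. apply continuity_2d_pt_const.
  apply (continuity_2d_pt_ext (fun u v => f u v * f u v ^ n)). intros; reflexivity.
  apply continuity_2d_pt_mult; auto.
Qed.

Ltac c2d := repeat first [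
  apply c2d_div | apply c2d_minus | apply continuity_2d_pt_plus | apply continuity_2d_pt_mult
  | apply continuity_2d_pt_opp | apply c2d_pow | apply continuity_2d_pt_const
  | match goal with Hc : forall x y, continuity_2d_pt _ x y |- _ => apply Hc end ].

Lemma C2_all rho H w F c : Reg H w -> cont_I (dI rho) -> F <> 0 -> 0 < c ->
  (forall q p, Icl p -> c <= Bh H w q p) ->
  C2 (Iq rho H w F) /\ C2 (Eq1 rho H w F) /\ C2 (Jq H w).
Proof.
  intros R Cr HF Hc HB.
  assert (A1 : forall x y, continuity_2d_pt (fun u v => w u (clamp v)) x y) by (apply cont_strip_C2, (Cw _ _ R)).
  assert (A2 : forall x y, continuity_2d_pt (fun u v => dq w u (clamp v)) x y) by (apply cont_strip_C2, (Cwq _ _ R)).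
  assert (A3 : forall x y, continuity_2d_pt (fun u v => dp w u (clamp v)) x y) by (apply cont_strip_C2, (Cwp _ _ R)).
  assert (A4 : forall x y, continuity_2d_pt (fun u v => dq (dq w) u (clamp v)) x y) by (apply cont_strip_C2, (Cwqq _ _ R)).
  assert (A5 : forall x y, continuity_2d_pt (fun u v => dq (dp w) u (clamp v)) x y) by (apply cont_strip_C2, (Cwqp _ _ R)).
  assert (A6 : forall x y, continuity_2d_pt (fun u v => dI H (clamp v)) x y) by (apply (cont_I_C2 (dI H)), (CHp _ _ R)).
  assert (A7 : forall x y, continuity_2d_pt (fun u v => dI rho (clamp v)) x y) by (apply (cont_I_C2 (dI rho)), Cr).
  assert (N1 : forall x y, Bh H w x (clamp y) <> 0) by (intros; specialize (HB x (clamp y) (clamp_Icl y)); lra).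
  assert (N2 : forall y, dI H (clamp y) <> 0) by (intros; specialize (Hpos _ _ R (clamp y) (clamp_Icl y)); lra).
  split; [|split]; intros x y; unfold Iq, Eq1, Jq, Atil, Bh in *; c2d.
  all: try (apply Rmult_integral_contrapositive_currified; [lra|]); try (apply pow_nonzero); auto.
Qed.
Lemma C2_ex_RInt f q a b : C2 f -> ex_RInt (fun t => f q (clamp t)) a b.
Proof.
  intros Hf. apply (@ex_RInt_continuous R_CompleteNormedModule). intros z _.
  apply continuity_pt_filterlim. apply C2_contpt; auto.
Qed.

Lemma RInt_clamp (g : R -> R) : RInt (fun t => g (clamp t)) (-1) 0 = RInt g (-1) 0.
Proof. apply RInt_ext. intros x Hx. rewrite Rmin_left, Rmax_right in Hx by lra. rewrite clamp_id; auto. unfold Icl; lra. Qed.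

Lemma C2_ex_RInt' f q : C2 f -> ex_RInt (f q) (-1) 0.
Proof.
  intros Hf. apply (ex_RInt_ext (fun t => f q (clamp t))). intros x Hx. rewrite Rmin_left, Rmax_right in Hx by lra.
  rewrite clamp_id; auto. unfold Icl; lra. apply C2_ex_RInt; auto.
Qed.

Lemma Phi_deriv rho H w F c q : Reg H w -> cont_I (dI rho) -> F <> 0 -> 0 < c ->
  (forall q p, Icl p -> c <= Bh H w q p) ->
  is_derive (fun x => RInt (Iq rho H w F x) (-1) 0) q (RInt (Eq1 rho H w F q) (-1) 0).
Proof.
  intros R Cr HF Hc HB. destruct (C2_all rho H w F c R Cr HF Hc HB) as [CI [CE CJ]].
  assert (DI : forall u t, is_derive (fun z => Iq rho H w F z (clamp t)) u (Eq1 rho H w F u (clamp t))).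
  { intros u t. assert (It := clamp_Icl t). apply Iq_deriv.
    apply (Ew _ _ R); exact It. apply (Ewq _ _ R); exact It. apply (Ewp _ _ R); exact It.
    specialize (HB u _ It); lra. specialize (Hpos _ _ R _ It); lra. exact HF. }
  apply (is_derive_ext (fun x => RInt (fun t => Iq rho H w F x (clamp t)) (-1) 0)).
  { intros t. apply RInt_clamp. }
  rewrite <- RInt_clamp.
  rewrite (RInt_ext (fun t => Eq1 rho H w F q (clamp t)) (fun t => Derive (fun u => Iq rho H w F u (clamp t)) q)).
  2: { intros x _. symmetry. apply is_derive_unique. apply DI. }
  apply (is_derive_RInt_param (fun u t => Iq rho H w F u (clamp t))).
  - apply filter_forall. intros x t _. eexists. apply DI.
  - intros t _. apply (continuity_2d_pt_ext (fun u v => Eq1 rho H w F u (clamp v))).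
    intros; symmetry; apply is_derive_unique; apply DI. apply CE.
  - apply filter_forall. intros y. apply C2_ex_RInt; auto.
Qed.

Lemma RInt_opp_R (f : R -> R) a b : ex_RInt f a b -> RInt (fun x => - f x) a b = - RInt f a b.
Proof. intros Hf. exact (RInt_opp f a b Hf). Qed.

Lemma cont_I_opp f : cont_I f -> cont_I (fun p => - f p).
Proof.
  intros Hf x Ix eps He. destruct (Hf x Ix eps He) as [d [Hd P]]. exists d; split; auto.
  intros y Iy Hy. replace (- f y - - f x) with (- (f y - f x)) by ring. rewrite Rabs_Ropp. auto.
Qed.

Lemma S_const rho H w F c : Reg H w -> cont_I (dI rho) -> F <> 0 -> 0 < c ->
  (forall q p, Icl p -> c <= Bh H w q p) -> height_eq rho H w F -> H 0 = 1 ->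
  (forall q, w q (-1) = 0) ->
  forall q, RInt (Iq rho H w F q) (-1) 0 - rho 0 * w q 0 ^ 2 / (2 * F ^ 2)
          = RInt (Iq rho H w F 0) (-1) 0 - rho 0 * w 0 0 ^ 2 / (2 * F ^ 2).
Proof.
  intros R Cr HF Hc HB HE H0 Wb.
  destruct (C2_all rho H w F c R Cr HF Hc HB) as [CI [CE CJ]].
  intros q0.
  assert (HD : forall q, is_derive (fun q => RInt (Iq rho H w F q) (-1) 0 - rho 0 * w q 0 ^ 2 / (2 * F ^ 2)) q 0).
  2: exact (deriv0_const _ HD q0 0).
  intros q.
  assert (I0 : Icl 0) by (unfold Icl; lra). assert (Im1 : Icl (-1)) by (unfold Icl; lra).
  assert (J1 : Jq H w q (-1) = 0).
  { unfold Jq, dq. rewrite (Derive_ext _ (fun _ => 0)). rewrite Derive_const. ring. intros; apply Wb. }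
  assert (J0 : Jq H w q 0 = - rho 0 * w q 0 * dq w q 0 / F ^ 2).
  { destruct HE as [_ [BC _]]. specialize (BC q). cbv beta zeta in BC.
    rewrite hq_eq, hp_eq in BC by auto. unfold hfun in BC. rewrite H0 in BC.
    unfold Jq, Atil. replace (H 0 + w q 0 - 1) with (w q 0) in BC by (rewrite H0; ring).
    assert (HBq : Bh H w q 0 <> 0) by (specialize (HB q 0 I0); lra).
    assert (HH : dI H 0 <> 0) by (specialize (Hpos _ _ R 0 I0); lra).
    replace (- (- (1 + dq w q 0 ^ 2) / (2 * Bh H w q 0 ^ 2) + 1 / (2 * dI H 0 ^ 2)))
      with ((1 + dq w q 0 ^ 2) / (2 * Bh H w q 0 ^ 2) - 1 / (2 * dI H 0 ^ 2)) by (field; auto).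
    replace ((1 + dq w q 0 ^ 2) / (2 * Bh H w q 0 ^ 2) - 1 / (2 * dI H 0 ^ 2)) with (- (1 / F ^ 2 * rho 0 * w q 0)) by lra.
    field; auto. }
  assert (FT : RInt (fun p => - Eq1 rho H w F q p) (-1) 0 = Jq H w q 0 - Jq H w q (-1)).
  { apply FTC_I. intros x Ix. apply (Jq_deriv rho H w F q x c); auto.
    apply C2_cont_I; auto. apply cont_I_opp. apply C2_cont_I; auto. }
  rewrite RInt_opp_R in FT by (apply C2_ex_RInt'; auto).
  assert (Hval : RInt (Eq1 rho H w F q) (-1) 0 - rho 0 * (2 * w q 0 * dq w q 0) / (2 * F ^ 2) = 0).
  { assert (RInt (Eq1 rho H w F q) (-1) 0 = rho 0 * w q 0 * dq w q 0 / F ^ 2) by (rewrite J0, J1 in FT; lra).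
    rewrite H1. field; auto. }
  assert (Hd : is_derive (fun q => RInt (Iq rho H w F q) (-1) 0 - rho 0 * w q 0 ^ 2 / (2 * F ^ 2)) q
     (RInt (Eq1 rho H w F q) (-1) 0 - rho 0 * (2 * w q 0 * dq w q 0) / (2 * F ^ 2))).
  { apply (is_derive_minus (fun q => RInt (Iq rho H w F q) (-1) 0) (fun q => rho 0 * w q 0 ^ 2 / (2 * F ^ 2))).
    apply (Phi_deriv rho H w F c q); auto.
    auto_derive. apply (Ew _ _ R); auto. change (Derive (fun x => w x 0) q) with (dq w q 0). field; auto. }
  rewrite Hval in Hd. exact Hd.
Qed.

Lemma RInt_abs_bound (f : R -> R) M : ex_RInt f (-1) 0 -> (forall x, -1 < x < 0 -> Rabs (f x) <= M) ->
  Rabs (RInt f (-1) 0) <= M.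
Proof.
  intros Hf HM. apply Rabs_le.
  assert (C : forall c : R, RInt (fun _ : R => c) (-1) 0 = c).
  { intros c. rewrite (@RInt_const R_CompleteNormedModule). unfold scal; simpl; unfold mult; simpl. ring. }
  assert (E : forall c : R, ex_RInt (fun _ : R => c) (-1) 0) by (intros; apply (@ex_RInt_const R_NormedModule)).
  split.
  - rewrite <- (C (- M)). apply RInt_le; auto. lra. intros x Hx. specialize (HM x Hx). apply Rabs_le_between in HM. lra.
  - rewrite <- (C M). apply RInt_le; auto. lra. intros x Hx. specialize (HM x Hx). apply Rabs_le_between in HM. lra.
Qed.

Lemma RInt_minus_R (f g : R -> R) a b : ex_RInt f a b -> ex_RInt g a b ->
  RInt (fun x => f x - g x) a b = RInt f a b - RInt g a b.
Proof. intros Hf Hg. exact (RInt_minus f g a b Hf Hg). Qed.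

Lemma sq_le x d : Rabs x <= d -> x ^ 2 <= d ^ 2.
Proof. intros Hx. rewrite <- (pow2_abs x). apply pow_incr. split; auto. apply Rabs_pos. Qed.

Lemma pointwise_bound a b e cc d Mr F : 0 < cc -> F <> 0 -> 0 <= d ->
  cc <= a + b -> cc / 2 <= a -> Rabs b <= d -> Rabs e <= d -> forall r x, Rabs r <= Mr -> Rabs x <= d ->
  Rabs ((1 - e ^ 2) / (2 * (a + b)) + (a + b) / (2 * a ^ 2) + r * x ^ 2 / (2 * F ^ 2) - 1 / a)
   <= d ^ 2 * (2 / cc ^ 3 + 1 / (2 * cc) + Mr / (2 * F ^ 2)).
Proof.
  intros Hc HF Hd HB HA Hb He r x Hr Hx.
  assert (Ha : 0 < a) by lra. assert (HB' : 0 < a + b) by lra.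
  replace ((1 - e ^ 2) / (2 * (a + b)) + (a + b) / (2 * a ^ 2) + r * x ^ 2 / (2 * F ^ 2) - 1 / a)
    with (b ^ 2 / (2 * (a + b) * a ^ 2) - e ^ 2 / (2 * (a + b)) + r * x ^ 2 / (2 * F ^ 2)) by (field; lra).
  assert (Hb2 := sq_le _ _ Hb). assert (He2 := sq_le _ _ He). assert (Hx2 := sq_le _ _ Hx).
  assert (F2 : 0 < F ^ 2) by (apply pow2_gt_0; auto).
  assert (T1 : 0 <= b ^ 2 / (2 * (a + b) * a ^ 2) <= d ^ 2 * (2 / cc ^ 3)).
  { split. apply Rdiv_le_0_compat. apply pow2_ge_0. apply Rmult_lt_0_compat; [lra| apply pow2_gt_0; lra].
    apply Rle_trans with (d ^ 2 / (2 * cc * (cc/2) ^ 2)).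
    - unfold Rdiv. apply Rmult_le_compat; auto. apply pow2_ge_0. left; apply Rinv_0_lt_compat.
      apply Rmult_lt_0_compat; [lra| apply pow2_gt_0; lra].
      apply Rinv_le_contravar. apply Rmult_lt_0_compat; [lra| apply pow2_gt_0; lra].
      apply Rmult_le_compat; try lra. apply pow2_ge_0. apply pow_incr; lra.
    - right. field. lra. }
  assert (T2 : 0 <= e ^ 2 / (2 * (a + b)) <= d ^ 2 * (1 / (2 * cc))).
  { split. apply Rdiv_le_0_compat. apply pow2_ge_0. lra.
    apply Rle_trans with (d ^ 2 / (2 * cc)).
    - unfold Rdiv. apply Rmult_le_compat; auto. apply pow2_ge_0. left; apply Rinv_0_lt_compat; lra.
      apply Rinv_le_contravar; lra.
    - right. field. lra. }
  assert (T3 : Rabs (r * x ^ 2 / (2 * F ^ 2)) <= d ^ 2 * (Mr / (2 * F ^ 2))).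
  { unfold Rdiv. rewrite !Rabs_mult. rewrite (Rabs_right (x ^ 2)) by (apply Rle_ge, pow2_ge_0).
    rewrite (Rabs_right (/ (2 * F ^ 2))) by (apply Rle_ge; left; apply Rinv_0_lt_compat; lra).
    replace (d ^ 2 * (Mr * / (2 * F ^ 2))) with (Mr * d ^ 2 * / (2 * F ^ 2)) by ring.
    apply Rmult_le_compat_r. left; apply Rinv_0_lt_compat; lra.
    apply Rmult_le_compat; auto. apply Rabs_pos. apply pow2_ge_0. }
  eapply Rle_trans. apply Rabs_triang. 
  assert (Rabs (b ^ 2 / (2 * (a + b) * a ^ 2) - e ^ 2 / (2 * (a + b))) <= d ^ 2 * (2 / cc ^ 3) + d ^ 2 * (1 / (2 * cc))).
  { apply Rabs_le. lra. }
  lra.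
Qed.

Lemma bound_I (g : R -> R) : cont_I g -> exists M, 0 <= M /\ forall p, Icl p -> Rabs (g p) <= M.
Proof.
  intros Hg. destruct (continuity_ab_maj (fun v => Rabs (g (clamp v))) (-1) 0) as [Mx [HM _]]. lra.
  - intros x _. apply (continuity_pt_comp (fun v => g (clamp v)) Rabs). apply cont_I_clamp; auto. apply Rcontinuity_abs.
  - exists (Rabs (g (clamp Mx))). split. apply Rabs_pos. intros p Ip. specialize (HM p Ip). rewrite clamp_id in HM; auto.
Qed.

Lemma S0_eq rho H w F c : Reg H w -> cont_I (dI rho) -> F <> 0 -> 0 < c ->
  (forall q p, Icl p -> c <= Bh H w q p) -> height_eq rho H w F -> H 0 = 1 ->
  (forall q, w q (-1) = 0) ->
  (forall eps, 0 < eps -> exists M, forall q p, Icl p -> M < Rabs q ->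
     Rabs (w q p) < eps /\ Rabs (dq w q p) < eps /\ Rabs (dp w q p) < eps) ->
  RInt (Iq rho H w F 0) (-1) 0 - rho 0 * w 0 0 ^ 2 / (2 * F ^ 2) = RInt (fun p => 1 / dI H p) (-1) 0.
Proof.
  intros R Cr HF Hc HB HE H0 Wb Dec.
  destruct (C2_all rho H w F c R Cr HF Hc HB) as [CI [CE CJ]].
  destruct (bound_I _ Cr) as [Mr [HMr0 HMr]].
  assert (CHi : C2 (fun _ p => 1 / dI H p)).
  { assert (A6 : forall x y, continuity_2d_pt (fun u v => dI H (clamp v)) x y) by (apply (cont_I_C2 (dI H)), (CHp _ _ R)).
    intros x y. cbv beta. c2d. specialize (Hpos _ _ R (clamp y) (clamp_Icl y)); lra. }
  assert (F2 : 0 < F ^ 2) by (apply pow2_gt_0; auto).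
  set (K1 := 2 / c ^ 3 + 1 / (2 * c) + Mr / (2 * F ^ 2)).
  set (K := K1 + Rabs (rho 0) / (2 * F ^ 2)).
  assert (HK1 : 0 <= K1).
  { unfold K1. assert (0 < 2 / c ^ 3) by (apply Rdiv_lt_0_compat; [lra| apply pow_lt; lra]).
    assert (0 < 1 / (2 * c)) by (apply Rdiv_lt_0_compat; lra).
    assert (0 <= Mr / (2 * F ^ 2)) by (apply Rdiv_le_0_compat; lra). lra. }
  assert (HK : 0 < K).
  { unfold K, K1. assert (0 < 2 / c ^ 3) by (apply Rdiv_lt_0_compat; [lra| apply pow_lt; lra]).
    assert (0 < 1 / (2 * c)) by (apply Rdiv_lt_0_compat; lra).
    assert (0 <= Mr / (2 * F ^ 2)) by (apply Rdiv_le_0_compat; lra).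
    assert (0 <= Rabs (rho 0) / (2 * F ^ 2)) by (apply Rdiv_le_0_compat; [apply Rabs_pos|lra]). lra. }
  set (S0 := RInt (Iq rho H w F 0) (-1) 0 - rho 0 * w 0 0 ^ 2 / (2 * F ^ 2)).
  set (L := RInt (fun p => 1 / dI H p) (-1) 0).
  assert (Main : forall d, 0 < d -> d <= 1 -> d <= c / 2 -> Rabs (S0 - L) <= d * K).
  { intros d Hd Hd1 Hd2. destruct (Dec d Hd) as [M HM].
    set (q := Rabs M + 1).
    assert (Hq : M < Rabs q). { unfold q. rewrite Rabs_right. assert (Hm := Rle_abs M). lra. assert (Hm := Rabs_pos M). lra. }
    unfold S0. rewrite <- (S_const rho H w F c R Cr HF Hc HB HE H0 Wb q).
    assert (I1 : Rabs (RInt (Iq rho H w F q) (-1) 0 - L) <= d ^ 2 * K1).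
    { unfold L. rewrite <- RInt_minus_R. 2: apply C2_ex_RInt'; auto. 2: apply (C2_ex_RInt' _ 0 CHi).
      apply RInt_abs_bound. apply (@ex_RInt_minus R_NormedModule). apply C2_ex_RInt'; auto. apply (C2_ex_RInt' _ 0 CHi).
      intros x Ix. assert (Ix' := Icl_of x Ix). destruct (HM q x Ix' Hq) as [B1 [B2 B3]].
      unfold Iq, Bh, K1. apply pointwise_bound; auto; try lra.
      - apply (HB q x Ix').
      - specialize (HB q x Ix'). unfold Bh in HB. assert (Hb := Rle_abs (dp w q x)). lra. }
    assert (I2 : Rabs (rho 0 * w q 0 ^ 2 / (2 * F ^ 2)) <= d ^ 2 * (Rabs (rho 0) / (2 * F ^ 2))).
    { destruct (HM q 0 ltac:(unfold Icl; lra) Hq) as [B1 _]. assert (Hx2 := sq_le (w q 0) d ltac:(lra)).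
      unfold Rdiv. rewrite !Rabs_mult. rewrite (Rabs_right (w q 0 ^ 2)) by (apply Rle_ge, pow2_ge_0).
      rewrite (Rabs_right (/ (2 * F ^ 2))) by (apply Rle_ge; left; apply Rinv_0_lt_compat; lra).
      replace (d ^ 2 * (Rabs (rho 0) * / (2 * F ^ 2))) with (Rabs (rho 0) * d ^ 2 * / (2 * F ^ 2)) by ring.
      apply Rmult_le_compat_r. left; apply Rinv_0_lt_compat; lra.
      apply Rmult_le_compat; auto. apply Rabs_pos. apply pow2_ge_0. right; auto. }
    replace (RInt (Iq rho H w F q) (-1) 0 - rho 0 * w q 0 ^ 2 / (2 * F ^ 2) - L) with
      ((RInt (Iq rho H w F q) (-1) 0 - L) - rho 0 * w q 0 ^ 2 / (2 * F ^ 2)) by ring.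
    eapply Rle_trans. unfold Rminus at 1. apply Rabs_triang. rewrite Rabs_Ropp.
    assert (d ^ 2 <= d) by (simpl; nra).
    unfold K.
    assert (0 <= Rabs (rho 0) / (2 * F ^ 2)) by (apply Rdiv_le_0_compat; [apply Rabs_pos|lra]).
    nra. }
  apply Rminus_diag_uniq. destruct (Req_dec (S0 - L) 0) as [|Hn]; auto. exfalso.
  assert (Hx : 0 < Rabs (S0 - L)) by (apply Rabs_pos_lt; auto).
  set (d := Rmin (Rmin 1 (c / 2)) (Rabs (S0 - L) / (2 * K))).
  assert (D1 : d <= Rmin 1 (c / 2)) by apply Rmin_l. assert (D2 : d <= Rabs (S0 - L) / (2 * K)) by apply Rmin_r.
  assert (Rmin 1 (c/2) <= 1) by apply Rmin_l. assert (Rmin 1 (c/2) <= c/2) by apply Rmin_r.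
  assert (Hd : 0 < d) by (repeat apply Rmin_glb_lt; try lra; apply Rdiv_lt_0_compat; lra).
  specialize (Main d Hd ltac:(lra) ltac:(lra)).
  assert (d * K <= Rabs (S0 - L) / 2).
  { apply Rle_trans with (Rabs (S0 - L) / (2 * K) * K). apply Rmult_le_compat_r; lra. right; field; lra. }
  lra.
Qed.

Lemma RInt_lin (f g : R -> R) a b (x y : R) : ex_RInt f a b -> ex_RInt g a b ->
  RInt (fun t => x * f t + y * g t) a b = x * RInt f a b + y * RInt g a b.
Proof.
  intros Hf Hg.
  assert (E1' : ex_RInt (fun t => x * f t) a b) by exact (ex_RInt_scal f a b x Hf).
  assert (E2' : ex_RInt (fun t => y * g t) a b) by exact (ex_RInt_scal g a b y Hg).
  transitivity (RInt (fun t => x * f t) a b + RInt (fun t => y * g t) a b).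
  exact (RInt_plus _ _ a b E1' E2').
  f_equal. exact (RInt_scal f a b x Hf). exact (RInt_scal g a b y Hg).
Qed.

Lemma even_deriv0 (f : R -> R) : (forall x, f (- x) = f x) -> ex_derive f 0 -> Derive f 0 = 0.
Proof.
  intros Hev Hd.
  assert (H2 : is_derive (fun x => f (- x)) 0 (- Derive f 0)).
  { auto_derive. rewrite Ropp_0; auto. rewrite Ropp_0. change (Derive (fun x => f x) 0) with (Derive f 0). ring. }
  apply (is_derive_ext _ f) in H2. 2: { intros; apply Hev. }
  apply is_derive_unique in H2. lra.
Qed.

Theorem lemma4p6 (a : R) (rho H : R -> R) (w : R -> R -> R) (F : R) :
  0 < a < 1 ->
  CkaI 2 a rho -> (forall p, Icl p -> 0 < rho p) ->
  (forall p, Icl p -> dI rho p <= 0) ->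
  CkaI 3 a H -> H (-1) = 0 -> H 0 = 1 -> (forall p, Icl p -> 0 < dI H p) ->
  inX a w -> F <> 0 -> height_eq rho H w F ->
  1 / F ^ 2 * (RInt (fun p => Rabs (dI rho p) * w 0 p ^ 2) (-1) 0
               + rho 0 * w 0 0 ^ 2)
  = RInt (fun p => dp w 0 p ^ 2 / (dI H p ^ 2 * dp (hfun H w) 0 p)) (-1) 0.
Proof.
  intros Ha Crho Rpos Rneg CH Hm1 H0 HHp HX HF HE.
  destruct HX as [[K1 [K2 [K3 K4]]] [Hev [Dec3 Wb]]].
  destruct Crho as [_ [Cr _]]. assert (Cr1 : cont_I (dI rho)) by exact (Cr 1%nat ltac:(lia)).
  destruct CH as [D1 [D2 _]].
  assert (RG : Reg H w).
  { constructor.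
    - intros q p Ip. exact (proj1 (K1 nil ltac:(simpl; lia) q p Ip)).
    - intros q p Ip. exact (proj1 (K1 (true :: nil) ltac:(simpl; lia) q p Ip)).
    - intros q p Ip. exact (proj1 (K1 (false :: nil) ltac:(simpl; lia) q p Ip)).
    - intros q p Ip. exact (proj2 (K1 nil ltac:(simpl; lia) q p Ip)).
    - intros q p Ip. exact (proj2 (K1 (true :: nil) ltac:(simpl; lia) q p Ip)).
    - intros q p Ip. exact (proj2 (K1 (false :: nil) ltac:(simpl; lia) q p Ip)).
    - exact (K2 nil ltac:(simpl; lia)).
    - exact (K2 (true :: nil) ltac:(simpl; lia)).
    - exact (K2 (false :: nil) ltac:(simpl; lia)).
    - exact (K2 (true :: true :: nil) ltac:(simpl; lia)).
    - exact (K2 (true :: false :: nil) ltac:(simpl; lia)).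
    - exact (K2 (false :: true :: nil) ltac:(simpl; lia)).
    - intros p Ip. exact (D1 0%nat ltac:(lia) p Ip).
    - intros p Ip. exact (D1 1%nat ltac:(lia) p Ip).
    - exact (D2 1%nat ltac:(lia)).
    - exact HHp. }
  assert (HE' := HE). destruct HE' as [_ [_ [_ [c [Hc Hcb]]]]].
  assert (HB := B_lb H w c RG Hcb).
  assert (Dec : forall eps, 0 < eps -> exists M, forall q p, Icl p -> M < Rabs q ->
     Rabs (w q p) < eps /\ Rabs (dq w q p) < eps /\ Rabs (dp w q p) < eps).
  { intros eps He. destruct (Dec3 nil ltac:(simpl; lia) eps He) as [M1 P1].
    destruct (Dec3 (true :: nil) ltac:(simpl; lia) eps He) as [M2 P2].
    destruct (Dec3 (false :: nil) ltac:(simpl; lia) eps He) as [M3 P3].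
    exists (Rmax M1 (Rmax M2 M3)). intros q p Ip Hq.
    assert (M1 <= Rmax M1 (Rmax M2 M3)) by apply Rmax_l.
    assert (Rmax M2 M3 <= Rmax M1 (Rmax M2 M3)) by apply Rmax_r.
    assert (M2 <= Rmax M2 M3) by apply Rmax_l. assert (M3 <= Rmax M2 M3) by apply Rmax_r.
    split; [|split]. apply (P1 q p Ip); lra. apply (P2 q p Ip); lra. apply (P3 q p Ip); lra. }
  assert (S0 := S0_eq rho H w F c RG Cr1 HF Hc HB HE H0 Wb Dec).
  destruct (C2_all rho H w F c RG Cr1 HF Hc HB) as [CI _].
  assert (CHi : C2 (fun _ p => 1 / dI H p)).
  { assert (A6 : forall x y, continuity_2d_pt (fun u v => dI H (clamp v)) x y) by (apply (cont_I_C2 (dI H)), (CHp _ _ RG)).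
    intros x y. cbv beta. c2d. specialize (Hpos _ _ RG (clamp y) (clamp_Icl y)); lra. }
  assert (CX : C2 (fun q p => dp w q p ^ 2 / (dI H p ^ 2 * Bh H w q p))).
  { assert (A3 : forall x y, continuity_2d_pt (fun u v => dp w u (clamp v)) x y) by (apply cont_strip_C2, (Cwp _ _ RG)).
    assert (A6 : forall x y, continuity_2d_pt (fun u v => dI H (clamp v)) x y) by (apply (cont_I_C2 (dI H)), (CHp _ _ RG)).
    intros x y. unfold Bh. c2d.
    assert (0 < dI H (clamp y)) by (apply (Hpos _ _ RG); apply clamp_Icl).
    assert (c <= Bh H w x (clamp y)) by (apply HB; apply clamp_Icl). unfold Bh in *.
    apply Rmult_integral_contrapositive_currified; [apply pow_nonzero|]; lra. }
  assert (CY : C2 (fun q p => - dI rho p * w q p ^ 2)).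
  { assert (A1 : forall x y, continuity_2d_pt (fun u v => w u (clamp v)) x y) by (apply cont_strip_C2, (Cw _ _ RG)).
    assert (A7 : forall x y, continuity_2d_pt (fun u v => dI rho (clamp v)) x y) by (apply (cont_I_C2 (dI rho)), Cr1).
    intros x y. c2d. }
  set (X := fun p => dp w 0 p ^ 2 / (dI H p ^ 2 * dp (hfun H w) 0 p)).
  set (Y := fun p => Rabs (dI rho p) * w 0 p ^ 2).
  assert (EX : ex_RInt X (-1) 0).
  { apply (ex_RInt_ext (fun p => dp w 0 p ^ 2 / (dI H p ^ 2 * Bh H w 0 p))).
    intros x Hx. rewrite Rmin_left, Rmax_right in Hx by lra. unfold X. rewrite hp_eq; auto. apply Icl_of; auto.
    apply (C2_ex_RInt' _ 0 CX). }
  assert (EY : ex_RInt Y (-1) 0).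
  { apply (ex_RInt_ext (fun p => - dI rho p * w 0 p ^ 2)).
    intros x Hx. rewrite Rmin_left, Rmax_right in Hx by lra. unfold Y. rewrite Rabs_left1 by (apply Rneg; apply Icl_of; auto). reflexivity.
    apply (C2_ex_RInt' _ 0 CY). }
  assert (Lin : RInt (fun p => Iq rho H w F 0 p - 1 / dI H p) (-1) 0 = (1/2) * RInt X (-1) 0 + (- (1 / (2 * F ^ 2))) * RInt Y (-1) 0).
  { rewrite <- RInt_lin; auto. apply RInt_ext. intros x Hx. rewrite Rmin_left, Rmax_right in Hx by lra.
    assert (Ix : Icl x) by (apply Icl_of; auto).
    unfold X, Y, Iq. rewrite hp_eq; auto.
    assert (Hq0 : dq w 0 x = 0). { unfold dq. apply even_deriv0. intros; apply Hev; auto. apply (Ew _ _ RG); auto. }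
    rewrite Hq0. rewrite Rabs_left1 by (apply Rneg; auto).
    assert (0 < dI H x) by (apply (Hpos _ _ RG); auto). assert (c <= Bh H w 0 x) by (apply HB; auto).
    unfold Bh in *. match goal with |- ?a = ?b => change (@eq R a b) end. field. repeat split; lra. }
  rewrite RInt_minus_R in Lin. 2: apply C2_ex_RInt'; auto. 2: apply (C2_ex_RInt' _ 0 CHi).
  fold X. fold Y. rewrite <- S0 in Lin.
  assert (Alg : forall ri rx ry t : R, ri - (ri - t / (2 * F ^ 2)) = 1 / 2 * rx + - (1 / (2 * F ^ 2)) * ry ->
     1 / F ^ 2 * (ry + t) = rx).
  { intros ri rx ry t Hl. assert (Hl' : rx = 2 * (t / (2 * F ^ 2)) + ry / F ^ 2).
    { replace (t / (2 * F ^ 2)) with (ri - (ri - t / (2 * F ^ 2))) by ring. rewrite Hl. field. auto. }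
    rewrite Hl'. field. auto. }
  exact (Alg _ _ _ _ Lin).
Qed.
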